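(* Let $p$ be a prime with $p\equiv 1\pmod 4$, and let $$D_p(2,2)=\det\left[(i^2+2ij+2j^2)^{p-2}\right]_{1\le i,j\le p-1}.$$ Then $$\left(\frac{D_p(2,2)}{p}\right)=\begin{cases}1 & \text{if } p\equiv 1\pmod 8,\\ 0 & \text{if } p\equiv 5\pmod 8.\end{cases}$$
   Context: $\left(\frac{\cdot}{p}\right)$ denotes the Legendre symbol modulo $p$. The determinant is of the $(p-1)\times(p-1)$ integer matrix whose $(i,j)$ entry is $(i^2+2ij+2j^2)^{p-2}$. *)

(* Defs.v *)
From HB Require Import structures.
From mathcomp Require Import all_boot all_order all_algebra.
Set Implicit Arguments. Unset Strict Implicit. Unset Printing Implicit Defensive.
Import Order.TTheory GRing.Theory Num.Theory.
Local Open Scope ring_scope.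

Definition legendre (a : int) (p : nat) : int :=
  if (p%:Z %| a)%Z then 0
  else if [exists x : 'I_p, (p%:Z %| (x * x)%:Z - a)%Z] then 1 else -1.

(* D_p(2,2) = det [ (i^2 + 2ij + 2j^2)^(p-2) ]_{1 <= i,j <= p-1}, as an integer.
   Index k : 'I_(p-1) represents k+1. *)
Definition Dp22 (p : nat) : int :=
  \det (\matrix_(i < p.-1, j < p.-1)
          ((i.+1 ^ 2 + 2 * i.+1 * j.+1 + 2 * j.+1 ^ 2) ^ (p - 2))%N%:Z).

(* Main.v *)
Require Import Defs.
From HB Require Import structures.
From mathcomp Require Import all_boot all_order all_algebra all_field.
From mathcomp Require Import ring zify.
Set Implicit Arguments. Unset Strict Implicit. Unset Printing Implicit Defensive.
Import Order.TTheory GRing.Theory Num.Theory.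
Local Open Scope ring_scope.


Lemma prod_pair (R : comRingType) (f : nat -> R) n :
  \prod_(0 <= k < n.*2.+2) f k =
  f n * f n.*2.+1 * \prod_(0 <= k < n) (f k * f (n.*2 - k)%N).
Proof.
have re : \prod_(n.+1 <= k < n.*2.+1) f k = \prod_(0 <= k < n) f (n.*2 - k)%N.
  have -> : n.+1 = (0 + n.+1)%N by [].
  rewrite big_addn.
  have -> : (n.*2.+1 - n.+1 = n)%N by lia.
  rewrite big_nat_rev /=; apply: eq_big_nat => i /andP [_ hi].
  congr f; lia.
rewrite big_nat_recr //= (@big_cat_nat _ _ _ n) //=; last by lia.
rewrite (@big_ltn _ _ _ n) ?re; last by lia.
rewrite big_split /=; ring.
Qed.

Section Core.
Variable F : fieldType.
Variable p : nat.
Hypothesis p_gt2 : (2 < p)%N.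
Hypothesis p_odd : odd p.
Hypothesis pchar0 : p%:R = 0 :> F.
Hypothesis natr_nz : forall m, (0 < m < p)%N -> m%:R != 0 :> F.
Hypothesis fermat : forall x : F, x != 0 -> x ^+ p.-1 = 1.
Variable t : F.
Hypothesis tt : t ^+ 2 = -1.

Lemma fermat' (x : F) : x ^+ p = x.
Proof.
have [->|nz] := eqVneq x 0; first by rewrite expr0n; case: p p_gt2.
by rewrite -(prednK (ltnW (ltnW p_gt2))) exprS fermat // mulr1.
Qed.

Lemma two_nz : 2 != 0 :> F.
Proof. by have := natr_nz (m:=2); apply; rewrite p_gt2. Qed.

Lemma predp_R : (p.-1)%:R = -1 :> F.
Proof.
apply/eqP; rewrite -subr_eq0 opprK natr1 prednK ?pchar0 //.
by rewrite (ltn_trans _ p_gt2).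
Qed.

Definition G (w : F) := \sum_(k < p.-1) w ^+ k.

Lemma G_eq w : w != 0 -> G w = if w == 1 then -1 else 0.
Proof.
move=> wn; case: eqP => [->|/eqP w1].
  by rewrite /G (eq_bigr (fun _ => 1)) => [|i _]; rewrite ?expr1n // sumr_const card_ord predp_R.
have := subrX1 w p.-1; rewrite fermat // subrr => /esym /eqP.
by rewrite mulf_eq0 subr_eq0 (negbTE w1) => /eqP.
Qed.

Definition S (w : F) := \sum_(k < p.-1) (k.+1)%:R * w ^+ k.

Lemma S_gen (w : F) n :
  (1 - w) ^+ 2 * \sum_(k < n) (k.+1)%:R * w ^+ k
  = 1 - (n.+1)%:R * w ^+ n + n%:R * w ^+ n.+1.
Proof.
elim: n => [|n IH]; first by rewrite big_ord0 mulr0 !mul1r expr0 mul0r addr0 subrr.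
rewrite big_ord_recr /= mulrDr IH -!natr1 !exprS; ring.
Qed.

Lemma S_eq w : S w = (1 - w) ^+ (p - 2).
Proof.
have [->|w1] := eqVneq w 1.
  rewrite subrr expr0n /= subn_eq0 leqNgt p_gt2 /S.
  rewrite (eq_bigr (fun k : 'I_p.-1 => (k.+1)%:R)) => [|i _]; last by rewrite expr1n mulr1.
  rewrite -natr_sum.
  have -> : (\sum_(k < p.-1) k.+1 = 'C(p, 2))%N.
    rewrite -bin2_sum big_mkord -(prednK (ltnW (ltnW p_gt2))) big_ord_recl /=.
    by rewrite add0n.
  by rewrite bin2odd // natrM pchar0 mul0r.
have nz : 1 - w != 0 by rewrite subr_eq0 eq_sym.
have := S_gen w p.-1; rewrite prednK ?pchar0 ?(ltn_trans _ p_gt2) //.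
rewrite mul0r subr0 predp_R mulN1r fermat' -/(S w) => H.
have e1 : (1 - w) ^+ 2 * (1 - w) ^+ (p - 2) = 1 - w.
  by rewrite -exprD addnC subnK ?(ltnW p_gt2) // fermat'.
apply: (mulfI (expf_neq0 2 nz)); rewrite e1 H; done.
Qed.

Lemma t_nz : t != 0.
Proof.
apply/eqP=> t0; move: tt; rewrite t0 expr0n /= => /eqP; rewrite eq_sym oppr_eq0.
by rewrite oner_eq0.
Qed.

Definition al := 1 + t.
Definition be := 1 - t.

Lemma albe : al * be = 2.
Proof. rewrite /al /be; ring: tt. Qed.

Lemma al_nz : al != 0.
Proof. by apply: contra two_nz => /eqP a0; rewrite -albe a0 mul0r. Qed.

Lemma be_nz : be != 0.
Proof. by apply: contra two_nz => /eqP a0; rewrite -albe a0 mulr0. Qed.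

Lemma albe_sub : al - be = 2 * t.
Proof. rewrite /al /be; ring. Qed.

Lemma albe_sub_nz : al - be != 0.
Proof. by rewrite albe_sub mulf_neq0 ?two_nz ?t_nz. Qed.

Lemma inv_pow (z : F) : z != 0 -> z ^+ (p - 2) = z^-1.
Proof.
move=> nz; apply: (mulIf nz); rewrite mulVf // -exprSr -subSn ?(ltnW p_gt2) //.
by rewrite subSS subn1 fermat.
Qed.

Definition e (k : nat) := (-1) ^+ k * ((k.+1)%:R * (al ^+ k.+1 - be ^+ k.+1) / (al - be)
   + (al ^+ k + be ^+ k) / 2).

Definition h (u : F) := (1 + 2 * u + 2 * u ^+ 2) ^+ (p - 2).

Lemma sum_e u : \sum_(k < p.-1) e k * u ^+ k =
  (al * S (- (al * u)) - be * S (- (be * u))) / (al - be) + (G (- (al * u)) + G (- (be * u))) / 2.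
Proof.
rewrite /S /G !mulr_sumr -sumrB -big_split /= !mulr_suml -big_split /=.
apply: eq_bigr => k _; rewrite /e (exprNn (al * u)) (exprNn (be * u)) !exprMn !exprS.
field; by rewrite two_nz albe_sub_nz.
Qed.

Lemma negeq1 (x : F) : (- x == 1) = (1 + x == 0).
Proof. by rewrite addr_eq0 eq_sym. Qed.

Lemma h_exp u : u != 0 -> h u = \sum_(k < p.-1) e k * u ^+ k.
Proof.
move=> un; rewrite sum_e !S_eq !opprK.
have Q : 1 + 2 * u + 2 * u ^+ 2 = (1 + al * u) * (1 + be * u).
  rewrite /al /be; ring: tt.
rewrite /h Q.
have alu : - (al * u) != 0 by rewrite oppr_eq0 mulf_neq0 ?al_nz.
have beu : - (be * u) != 0 by rewrite oppr_eq0 mulf_neq0 ?be_nz.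
rewrite !G_eq // !negeq1.
have [z1|z1] := eqVneq (1 + al * u) 0.
  have z2 : 1 + be * u != 0.
    apply: contra albe_sub_nz => /eqP z2; apply/eqP.
    apply: (mulIf un); rewrite mul0r mulrBl.
    by rewrite -[al * u](addKr 1) z1 -[be * u](addKr 1) z2 subrr.
  have ue : u = - al^-1.
    apply: (mulfI al_nz); rewrite mulrN mulfV ?al_nz //; apply/eqP.
    by rewrite -addr_eq0 addrC z1.
  rewrite z1 (negbTE z2) mul0r !expr0n /= subn_eq0 leqNgt p_gt2 /= mulr0 sub0r.
  rewrite inv_pow // ue /al /be; field: tt.
  by rewrite two_nz -/al -/be albe_sub_nz al_nz.
have [z2|z2] := eqVneq (1 + be * u) 0.
  have ue : u = - be^-1.
    apply: (mulfI be_nz); rewrite mulrN mulfV ?be_nz //; apply/eqP.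
    by rewrite -addr_eq0 addrC z2.
  rewrite z2 mulr0 !expr0n /= subn_eq0 leqNgt p_gt2 /= mulr0 subr0.
  rewrite inv_pow // ue /al /be; field: tt.
  by rewrite two_nz -/al -/be albe_sub_nz be_nz mulrN1 -opprB oppr_eq0 albe_sub_nz.
rewrite !inv_pow ?mulf_neq0 // addr0 mul0r addr0 invfM.
field; by rewrite z1 z2 albe_sub_nz.
Qed.

Definition Qf (x y : F) := x ^+ 2 + 2 * x * y + 2 * y ^+ 2.

Lemma entry_eq (x y : F) : x != 0 -> y != 0 ->
  Qf x y ^+ (p - 2) = x ^+ (2 * (p - 2)) * \sum_(k < p.-1) e k * (y / x) ^+ k.
Proof.
move=> xn yn.
have -> : Qf x y = x ^+ 2 * (1 + 2 * (y / x) + 2 * (y / x) ^+ 2).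
  rewrite /Qf; field; done.
by rewrite exprMn -exprM -h_exp // mulf_neq0 ?invr_eq0.
Qed.

Lemma divf_eq1 (x y : F) : y != 0 -> (x / y == 1) = (x == y).
Proof.
move=> yn; apply/eqP/eqP => [h|->]; last by rewrite divff.
by rewrite -(divfK yn x) h mul1r.
Qed.

Lemma det_main (xs : 'I_p.-1 -> F) : (forall i, xs i != 0) -> injective xs ->
  \det (\matrix_(i, j) (Qf (xs i) (xs j) ^+ (p - 2)))
  = (\prod_i xs i ^+ (p - 2)) ^+ 2 * \prod_(k < p.-1) e k.
Proof.
move=> xnz xinj.
pose d := \row_(i < p.-1) xs i ^+ (2 * (p - 2)).
pose W := \matrix_(i < p.-1, k < p.-1) (xs i)^-1 ^+ k.
pose E := \row_(k < p.-1) e k.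
pose Y := \matrix_(j < p.-1, k < p.-1) xs j ^+ k.
have -> : \matrix_(i, j) (Qf (xs i) (xs j) ^+ (p - 2)) = diag_mx d *m (W *m diag_mx E) *m Y^T.
  apply/matrixP => i j; rewrite mul_mx_diag mul_diag_mx !mxE entry_eq // mulr_sumr.
  apply: eq_bigr => k _; rewrite !mxE exprMn exprVn; ring.
have WY : W *m Y^T = (-1)%:M.
  apply/matrixP => i j; rewrite !mxE.
  rewrite (eq_bigr (fun k : 'I_p.-1 => (xs j / xs i) ^+ k)); last first.
    by move=> k _; rewrite !mxE exprMn mulrC.
  rewrite -/(G _) G_eq ?mulf_neq0 ?invr_eq0 //.
  rewrite divf_eq1 ?xnz // (inj_eq xinj) eq_sym.
  by case: eqP => _; rewrite ?mulr1n ?mulr0n.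
rewrite !det_mulmx !det_diag.
have : \det W * \det Y = 1.
  rewrite -(det_tr Y) -det_mulmx WY det_scalar -signr_odd.
  have := p_odd; rewrite -(prednK (ltnW (ltnW p_gt2))) /= => po; by rewrite (negbTE po) expr0.
rewrite /= => WY1.
have -> : \prod_i d 0 i = (\prod_i xs i ^+ (p - 2)) ^+ 2.
  by rewrite -prodrXl; apply: eq_bigr => i _; rewrite mxE -exprM mulnC.
have -> : \prod_i E 0 i = \prod_(k < p.-1) e k by apply: eq_bigr => i _; rewrite mxE.
set c := (\prod_i _) ^+ 2. by rewrite det_tr -mulrA (mulrAC (\det W)) WY1 mul1r.
Qed.

Definition br (k : nat) : F :=
  match (k %% 4)%N with
  | 0 => 2 * (k.+2)%:R
  | 1 => be * (2 * k + 3)%:R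
  | 2 => - (2 * t * (k.+1)%:R)
  | _ => al
  end.

Lemma be_al : be = - t * al.
Proof. rewrite /be /al; ring: tt. Qed.

Lemma mt4 : (- t) ^+ 4 = 1.
Proof. by rewrite (exprM _ 2 2) sqrrN tt sqrrN expr1n. Qed.

Lemma e_form k : e k = (-1) ^+ k * al ^+ k / 2 * br k.
Proof.
have ek : be ^+ k = (- t) ^+ (k %% 4) * al ^+ k.
  rewrite be_al exprMn {1}(divn_eq k 4) exprD mulnC exprM mt4 expr1n mul1r; done.
rewrite /br /e !exprS; move: ek (ltn_pmod k (isT : (0 < 4)%N)).
have -> : (2 * k + 3)%:R = 2 * (k.+1)%:R + 1 :> F by rewrite -natr1 natrD natrM -natr1; ring.
rewrite -[(k.+2)%:R]natr1.
set K := (k.+1)%:R; set A := al ^+ k.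
case: (k %% 4)%N => [|[|[|[|r]]]] ek // _; rewrite ek.
- field: tt; by rewrite two_nz albe_sub_nz.
- rewrite /al /be; field: tt; by rewrite two_nz -/al -/be albe_sub_nz.
- rewrite /al /be; field: tt; by rewrite two_nz -/al -/be albe_sub_nz.
- rewrite /al /be; field: tt; by rewrite two_nz -/al -/be albe_sub_nz.
Qed.

Lemma pow_neg (x : F) j : x != 0 -> (j <= p.-1)%N -> x ^+ (p.-1 - j) = (x ^+ j)^-1.
Proof.
move=> nx hj; apply: (mulIf (expf_neq0 j nx)).
by rewrite -exprD subnK // fermat // mulVf // expf_neq0.
Qed.

Lemma al_inv : al^-1 = be / 2.
Proof. by apply: (mulfI al_nz); rewrite mulfV ?al_nz // mulrA albe divff ?two_nz. Qed.

Lemma be_inv : be^-1 = al / 2.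
Proof. by apply: (mulfI be_nz); rewrite mulfV ?be_nz // mulrA [be * al]mulrC albe divff ?two_nz. Qed.

Lemma e_sym k : (k <= p - 3)%N -> e k = 2 ^+ k.+1 * e (p - 3 - k).
Proof.
move=> hk; set j := (p - 3 - k)%N.
have pj1 : (j.+1 = p.-1 - k.+1)%N by rewrite /j; lia.
have pj2 : (j = p.-1 - k.+2)%N by rewrite /j; lia.
have sgn : (-1) ^+ j = (-1) ^+ k :> F.
  rewrite -signr_odd -[in RHS]signr_odd /j oddB // oddB ?(ltnW p_gt2) // p_odd /=.
  by case: (odd k).
have Kj : (j.+1)%:R = - (k.+2)%:R :> F.
  apply/eqP; rewrite -addr_eq0 -natrD.
  have -> : (j.+1 + k.+2 = p)%N by rewrite /j; lia.
  by rewrite pchar0.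
have hk1 : (k.+1 <= p.-1)%N by lia.
have hk2 : (k.+2 <= p.-1)%N by lia.
rewrite /e sgn Kj pj1 pj2 (pow_neg al_nz hk1) (pow_neg be_nz hk1).
rewrite (pow_neg al_nz hk2) (pow_neg be_nz hk2) -!exprVn al_inv be_inv.
rewrite !exprMn !exprVn !exprS.
set A := al ^+ k; set B := be ^+ k; set P := 2 ^+ k.
have Pn : P != 0 by rewrite expf_neq0 ?two_nz.
rewrite /al /be; field: tt; by rewrite two_nz Pn -/al -/be albe_sub_nz.
Qed.

Lemma natr_nz' m : (0 < m)%N -> (m < p.*2)%N -> m != p -> m%:R != 0 :> F.
Proof.
move=> m0 m2 mp; case: (ltnP m p) => hm; first by apply: natr_nz; rewrite m0.
have -> : m = ((m - p) + p)%N by rewrite subnK.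
rewrite natrD pchar0 addr0; apply: natr_nz; lia.
Qed.

Lemma prod_e_zero : (p %% 8 = 5)%N -> \prod_(k < p.-1) e k = 0.
Proof.
move=> h5.
have hk : ((p - 3) %/ 2 < p.-1)%N by lia.
rewrite (bigD1 (Ordinal hk)) //= e_form /br.
have -> : (((p - 3) %/ 2) %% 4 = 1)%N by lia.
have -> : (2 * ((p - 3) %/ 2) + 3 = p)%N by lia.
by rewrite pchar0 !mulr0 mul0r.
Qed.

Lemma br_nz k : (p %% 8 = 1)%N -> (k < p.-1)%N -> br k != 0.
Proof.
move=> h1 hk; rewrite /br; case E: (k %% 4)%N => [|[|[|r]]].
- by rewrite mulf_neq0 ?two_nz // natr_nz; lia.
- by rewrite mulf_neq0 ?be_nz // natr_nz'; lia.
- by rewrite oppr_eq0 !mulf_neq0 ?two_nz ?t_nz // natr_nz; lia.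
- exact: al_nz.
Qed.

Lemma e_nz k : (p %% 8 = 1)%N -> (k < p.-1)%N -> e k != 0.
Proof.
move=> h1 hk; rewrite e_form !mulf_neq0 ?br_nz ?expf_neq0 ?invr_eq0 ?two_nz ?al_nz //.
by rewrite oppr_eq0 oner_eq0.
Qed.

Lemma sign_odd (k : nat) : (k %% 2 = 1)%N -> (-1) ^+ k = -1 :> F.
Proof. by rewrite -signr_odd modn2; case: (odd k). Qed.

Lemma e_3 k : (k %% 4 = 3)%N -> e k = - al ^+ k.+1 / 2.
Proof.
move=> h; rewrite e_form /br h sign_odd; last by lia.
rewrite exprS; field; by rewrite two_nz.
Qed.

Lemma prod_e_sq s : (p %% 8 = 1)%N -> s ^+ 2 = t -> exists y, \prod_(k < p.-1) e k = y ^+ 2.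
Proof.
move=> h1 hs.
set m := ((p - 3) %/ 2)%N.
have pm : p.-1 = m.*2.+2 by rewrite /m; lia.
have sn : s != 0 by apply: contra t_nz => /eqP s0; rewrite -hs s0 expr0n.
have w2 : (al / s) ^+ 2 = 2.
  rewrite expr_div_n hs /al; field: tt; exact: t_nz.
have c2 : (al ^+ m.+1) ^+ 2 = 1.
  rewrite -exprM; have -> : (m.+1 * 2 = p.-1)%N by rewrite /m; lia.
  by rewrite fermat ?al_nz.
have em : e m = - al ^+ m.+1 / 2 by apply: e_3; rewrite /m; lia.
have em2 : e m.*2.+1 = - 1 / 2.
  by rewrite e_3 -?pm ?fermat ?al_nz //; rewrite /m; lia.
have y0 : exists y0, e m * e m.*2.+1 = y0 ^+ 2.
  rewrite em em2.
  have : (al ^+ m.+1 - 1) * (al ^+ m.+1 + 1) = 0 by rewrite -subr_sqr c2 expr1n subrr.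
  move/eqP; rewrite mulf_eq0 subr_eq0 addr_eq0 => /orP [] /eqP ->.
    by exists (1 / 2); field; rewrite two_nz.
  by exists (t / 2); field: tt; rewrite two_nz.
case: y0 => y0 hy0.
exists (y0 * \prod_(0 <= k < m) ((al / s) ^+ k.+1 * e (m.*2 - k))).
rewrite pm -(big_mkord xpredT) prod_pair hy0 exprMn -prodrXl; congr (_ * _).
apply: eq_big_nat => k /andP [_ hk].
rewrite e_sym; last by rewrite /m; lia.
have -> : (p - 3 - k = m.*2 - k)%N by rewrite /m; lia.
by rewrite exprMn -exprM mulnC exprM w2 expr2 mulrA.
Qed.
End Core.



Lemma Fp_facts p : prime p -> (p %% 4 = 1)%N ->
  [/\ (2 < p)%N, odd p, p%:R = 0 :> 'F_p,
      (forall m, (0 < m < p)%N -> m%:R != 0 :> 'F_p)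
    & (forall x : 'F_p, x != 0 -> x ^+ p.-1 = 1)].
Proof.
move=> hp h4; have p1 := prime_gt1 hp; split.
- have : p != 2%N by apply/eqP => e2; rewrite e2 in h4.
  lia.
- have : (p %% 2 = 1)%N by lia.
  by rewrite modn2; case: (odd p).
- exact: pchar_Fp_0.
- move=> m /andP [m0 mp]; rewrite -(dvdn_pcharf (pchar_Fp hp)).
  by apply/negP => /dvdn_leq; move=> /(_ m0); lia.
- move=> x xn; apply: (mulIf xn); rewrite mul1r -exprSr prednK ?(ltnW p1) //.
  by have := expf_card x; rewrite card_Fp.
Qed.

Lemma Fp_nonres p : prime p -> (2 < p)%N -> odd p -> (forall x : 'F_p, x != 0 -> x ^+ p.-1 = 1) ->
  exists z : 'F_p, z ^+ (p.-1 %/ 2) = -1.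
Proof.
move=> hp p2 po ferm; set k := (p.-1 %/ 2)%N.
case: (boolP [exists z : 'F_p, z ^+ k == -1]) => [/existsP [z /eqP hz] | /existsPn H]; first by exists z.
exfalso.
have k2 : (k * 2 = p.-1)%N.
  have : (p %% 2 = 1)%N by rewrite modn2 po.
  rewrite /k; lia.
have allr : forall z : 'F_p, z != 0 -> z ^+ k = 1.
  move=> z zn; have : (z ^+ k - 1) * (z ^+ k + 1) = 0.
    by rewrite -subr_sqr -exprM k2 ferm // expr1n subrr.
  move/eqP; rewrite mulf_eq0 subr_eq0 addr_eq0 => /orP [/eqP //|/eqP hz].
  by move: (H z); rewrite hz eqxx.
pose rs := enum [pred z : 'F_p | z != 0].
have k0 : (0 < k)%N by rewrite /k; lia.
have := @max_poly_roots _ ('X^k - 1) rs.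
rewrite -size_poly_eq0 size_XnsubC // enum_uniq.
have -> : all (root ('X^k - 1)) rs.
  apply/allP => z; rewrite mem_enum inE => zn.
  by rewrite /root !hornerE allr ?subrr.
have -> : size rs = p.-1.
  by rewrite /rs -cardE cardC1 card_Fp.
move=> /(_ isT isT isT); lia.
Qed.

Theorem theorem1p2 (p : nat) (hp : prime p) (h4 : (p %% 4 = 1)%N) :
  legendre (Dp22 p) p = (if (p %% 8 == 1)%N then 1 else 0).
Proof.
have [p2 po pc nnz ferm] := Fp_facts hp h4.
have [z hz] := Fp_nonres hp p2 po ferm.
pose t := z ^+ (p.-1 %/ 4).
have tt : t ^+ 2 = -1.
  rewrite -exprM; have -> : (p.-1 %/ 4 * 2 = p.-1 %/ 2)%N by lia.
  exact: hz.
pose xs := fun i : 'I_p.-1 => (i.+1)%:R : 'F_p.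
have xnz : forall i, xs i != 0.
  by move=> i; apply: nnz; have := ltn_ord i; lia.
have xinj : injective xs.
  move=> i j /(congr1 (@nat_of_ord _)); rewrite /xs !(val_Fp_nat hp) !modn_small; try lia.
  - by move=> [] /val_inj.
  - by have := ltn_ord j; lia.
  - by have := ltn_ord i; lia.
have key : ((Dp22 p)%:~R : 'F_p) = \det (\matrix_(i, j) (Qf (xs i) (xs j) ^+ (p - 2))).
  rewrite /Dp22 -det_map_mx; congr (\det _); apply/matrixP => i j; rewrite !mxE.
  by rewrite /Qf /xs -!natrX -!natrM -!natrD -natrX.
have DE := det_main p2 po pc nnz ferm tt xnz xinj.
rewrite /legendre (dvdz_pcharf (pchar_Fp hp)) key DE.
have : (p %% 8 = 1)%N \/ (p %% 8 = 5)%N by lia.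
case => h8; last by rewrite h8 (prod_e_zero p2 po pc nnz tt h8) mulr0 eqxx.
rewrite h8 /=.
pose s := z ^+ (p.-1 %/ 8).
have hs : s ^+ 2 = t.
  rewrite -exprM; have -> : (p.-1 %/ 8 * 2 = p.-1 %/ 4)%N by lia.
  by [].
have [y hy] := prod_e_sq p2 po pc nnz ferm tt h8 hs.
have nz : (\prod_i xs i ^+ (p - 2)) ^+ 2 * \prod_(k < p.-1) e t k != 0.
  rewrite mulf_neq0 // ?expf_neq0 //; apply/prodf_neq0 => i _.
    by rewrite expf_neq0.
  exact: (e_nz p2 po pc nnz tt h8 (ltn_ord i)).
rewrite (negbTE nz).
set w := \prod_i xs i ^+ (p - 2) * y.
have wlt : (@nat_of_ord (Zp_trunc (pdiv p)).+2 w < p)%N.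
  by apply: leq_trans (ltn_ord w) _; rewrite (Fp_cast hp).
have wR : (Ordinal wlt)%:R = w :> 'F_p.
  by apply: val_inj; rewrite /= (val_Fp_nat hp) modn_small.
suff -> : [exists x : 'I_p, (p%:Z %| (x * x)%:Z - Dp22 p)%Z] by [].
apply/existsP; exists (Ordinal wlt).
rewrite (dvdz_pcharf (pchar_Fp hp)) rmorphB subr_eq0; apply/eqP.
transitivity (w * w); first by rewrite -[in RHS]wR -natrM.
symmetry; apply: (etrans key); by rewrite DE hy -exprMn expr2.
Qed.
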